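(* Let $N\ge 1$ be an integer, and let $1\le r\le N+1$ and $0\le i\le r$ be integers. Then \[ a^{(\lambda)}_{i,r-i}(N+1,x)=(-1)^{N+1+i-r}\, i!\, S_{1,i-1}(r-i)\, N!\, H_{N,r-1}\,(x)_{r-i}. \]
   Context: Let $x$ be a variable. $(x)_0=1$ and $(x)_n=x(x-1)\cdots(x-n+1)$ for $n\ge1$ (falling factorial). Generalized harmonic numbers: $H_{N,0}=1$ for all integers $N\ge 0$; $H_{N,1}=1+\frac12+\cdots+\frac1N$ for $N\ge1$; and for $2\le j\le N$, \[H_{N,j}=\frac{H_{N-1,j-1}}{N}+\frac{H_{N-2,j-1}}{N-1}+\cdots+\frac{H_{j-1,j-1}}{j}.\] Generalized Changhee power sums (for $k=1$), for integers $N\ge0$: $S_{1,-1}(N)=1$, $S_{1,0}(N)=N+1$, $S_{1,j}(N)=\sum_{l=0}^{N}S_{1,j-1}(l)$ for $j\ge1$. The coefficients $a^{(\lambda)}_{i,j}(N,x)$ (polynomials in $x$, indexed by integers $N\ge1$ and $i,j\ge0$ with $1\le i+j\le N$) are defined recursively by $a^{(\lambda)}_{1,0}(1,x)=-1$, $a^{(\lambda)}_{0,1}(1,x)=x$, and for $N\ge1$, $i,j\ge0$, $1\le i+j\le N+1$: \[ a^{(\lambda)}_{i,j}(N+1,x)=-N\,a^{(\lambda)}_{i,j}(N,x)-i\,a^{(\lambda)}_{i-1,j}(N,x)+(x-j+1)\,a^{(\lambda)}_{i,j-1}(N,x), \] with the convention that $a^{(\lambda)}_{i,j}(N,x)=0$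 whenever $i<0$, $j<0$, $i+j=0$, or $i+j>N$. (These are exactly the coefficients arising from repeatedly differentiating $F(t;x,\lambda)=\frac{2\lambda}{2\lambda+\log(1+\lambda t)}\bigl(1+\lambda^{-1}\log(1+\lambda t)\bigr)^x$ in the form $F^{(N)}=\lambda^N(1+\lambda t)^{-N}\sum_{1\le i+j\le N}a^{(\lambda)}_{i,j}(N,x)(2\lambda+\log(1+\lambda t))^{-i}(\lambda+\log(1+\lambda t))^{-j}F$.) *)

(* Defs.v *)
From HB Require Import structures.
From mathcomp Require Import all_boot all_order all_algebra.
Set Implicit Arguments. Unset Strict Implicit. Unset Printing Implicit Defensive.
Import Order.TTheory GRing.Theory Num.Theory.
Local Open Scope ring_scope.

Definition falling (n : nat) : {poly rat} := \prod_(k < n) ('X - (k%:R)%:P).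

(* Generalized harmonic numbers: harm j N = H_{N,j}
   (H_{N,0} = 1, H_{N,j} = sum_{m=j}^{N} H_{m-1,j-1}/m for j >= 1;
    for j = 1 this is 1 + 1/2 + ... + 1/N). *)
Fixpoint harm (j N : nat) : rat :=
  match j with
  | 0 => 1
  | j'.+1 => \sum_(j'.+1 <= m < N.+1) harm j' m.-1 / m%:R
  end.

(* Changhee power sums, shifted index: Sch k N = S_{1,k-1}(N)
   (S_{1,-1}(N) = 1, S_{1,j}(N) = sum_{l=0}^{N} S_{1,j-1}(l)). *)
Fixpoint Sch (k N : nat) : nat :=
  match k with
  | 0 => 1%N
  | k'.+1 => (\sum_(0 <= l < N.+1) Sch k' l)%N
  end.

(* a n i j = a^{(lambda)}_{i,j}(n, x) as a polynomial in x = 'X;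
   zero outside 1 <= i + j <= n (and for n = 0). *)
Fixpoint acoef (n i j : nat) : {poly rat} :=
  match n with
  | 0 => 0
  | n'.+1 =>
    if (1 <= i + j <= n)%N then
      match n' with
      | 0 =>
        if (i == 1%N) && (j == 0%N) then -1
        else if (i == 0%N) && (j == 1%N) then 'X else 0
      | _ =>
        - (n'%:R) *: acoef n' i j
        - (i%:R) *: (if i is i'.+1 then acoef n' i' j else 0)
        + ('X - (j%:R)%:P + 1) * (if j is j'.+1 then acoef n' i j' else 0)
      end
    else 0
  end.

(* Main.v *)
Require Import Defs.
From HB Require Import structures.
From mathcomp Require Import all_boot all_order all_algebra.
From mathcomp Require Import ring zify.
Import Order.TTheory GRing.Theory Num.Theory.
Local Open Scope ring_scope.

Definition Dc (N i j : nat) : rat :=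
  (-1) ^+ (N.+1 + j) * (i`!)%:R * (Sch i j)%:R * (N`!)%:R * harm (i + j).-1 N.

Lemma harm_gt k N : (N < k)%N -> harm k N = 0.
Proof. by case: k => [//|k] H /=; rewrite big_geq. Qed.

Lemma harmS k N : harm k.+1 N.+1 = harm k.+1 N + harm k N / N.+1%:R.
Proof.
rewrite [harm k.+1 N.+1]/= [harm k.+1 N]/=.
case: (leqP k.+1 N.+1) => H.
  by rewrite big_nat_recr.
rewrite !big_geq // ?harm_gt // ?mul0r ?addr0 //; apply: ltnW => //.
Qed.

Lemma SchS i j : Sch i.+1 j.+1 = (Sch i.+1 j + Sch i j.+1)%N.
Proof. by rewrite [Sch i.+1 j.+1]/= big_nat_recr. Qed.

Lemma Sch_0 i : Sch i 0 = 1%N.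
Proof. by elim: i => [//|i IH]; rewrite /= big_nat1. Qed.

Lemma fallingS j : falling j.+1 = falling j * ('X - (j%:R)%:P).
Proof. by rewrite /falling big_ord_recr. Qed.

Lemma acoefS N i j : acoef N.+2 i j =
  if (1 <= i + j <= N.+2)%N then
        - (N.+1%:R) *: acoef N.+1 i j
        - (i%:R) *: (if i is i'.+1 then acoef N.+1 i' j else 0)
        + ('X - (j%:R)%:P + 1) * (if j is j'.+1 then acoef N.+1 i j' else 0)
  else 0.
Proof. by []. Qed.

Lemma signB a b : (b <= a)%N -> (-1) ^+ (a - b) = (-1) ^+ (a + b) :> rat.
Proof.
move=> H; rewrite -signr_odd [in RHS]/= -[in RHS]signr_odd.
by rewrite oddB // oddD.
Qed.

Lemma harm0 N : harm 0 N = 1. Proof. by []. Qed.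
Lemma Sch0 j : Sch 0 j = 1%N. Proof. by []. Qed.

Lemma Xfall c j : ('X - (j.+1%:R)%:P + 1) * (c *: falling j) = c *: falling j.+1.
Proof.
rewrite fallingS -scalerAr mulrC; congr (_ *: (_ * _)).
rewrite -natr1 rmorphD rmorph1 /=; ring.
Qed.

Ltac nrm := rewrite /Dc ?add0n ?addn0 ?addSn ?addnS ?succnK ?harm0 ?Sch_0 ?Sch0 ?exprS ?factS ?natrM.

Lemma main N i j : (0 < i + j)%N -> acoef N.+1 i j = Dc N i j *: falling j.
Proof.
elim: N i j => [|N IH] i j Hij.
  case: i Hij => [|[|i]]; case: j => [|[|j]] //= _.
  all: try by rewrite /Dc harm_gt ?mulr0 ?scale0r.
  - by rewrite /Dc /falling big_ord_recr big_ord0 /= mul1r subr0 !mul1r scale1r.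
  - by rewrite /Dc /falling big_ord0 /= !mulr1 mulN1r big_nat1 mulr1n scaleN1r.
rewrite (acoefS N i j); case: ifP => Hb; last first.
  rewrite /Dc harm_gt ?mulr0 ?scale0r //.
  move/negbT: Hb; rewrite negb_and -!ltnNge; lia.
rewrite IH //.
move: Hij Hb; case: i => [|i]; case: j => [|j] => Hij Hb.
- by [].
- move: Hij Hb; case: j => [|j] => Hij Hb.
    have -> : acoef N.+1 0 0 = 0 by [].
    rewrite scale0r mulr0 subr0 addr0 scalerA; congr (_ *: _).
    by nrm; ring.
  rewrite IH // Xfall scale0r subr0 scalerA -scalerDl; congr (_ *: _).
  nrm; rewrite ?harmS; field; by rewrite addrC natr1 pnatr_eq0.
- move: Hij Hb; case: i => [|i] => Hij Hb.
    have -> : acoef N.+1 0 0 = 0 by [].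
    rewrite scaler0 mulr0 subr0 addr0 scalerA; congr (_ *: _).
    by nrm; ring.
  rewrite IH // mulr0 addr0 scalerA scalerA -scalerBl; congr (_ *: _).
  nrm; rewrite ?harmS; field; by rewrite addrC natr1 pnatr_eq0.
- rewrite !IH ?addnS // Xfall !scalerA -scalerBl -scalerDl; congr (_ *: _).
  nrm; rewrite ?harmS ?SchS ?natrD; field; by rewrite addrC natr1 pnatr_eq0.
Qed.

Theorem theorem2 (N r i : nat) :
  (1 <= N)%N -> (1 <= r <= N.+1)%N -> (i <= r)%N ->
  acoef N.+1 i (r - i) =
  ((-1) ^+ (N.+1 + i - r) * (i`!)%:R * (Sch i (r - i))%:R * (N`!)%:R
     * harm (r - 1) N) *: falling (r - i).
Proof.
move=> _ /andP[Hr1 HrN] Hir.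
rewrite main; last by rewrite subnKC.
congr (_ *: _); rewrite /Dc subnKC // subn1.
have -> : (N.+1 + i - r = N.+1 - (r - i))%N by lia.
by rewrite signB //; lia.
Qed.
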